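(* Suppose $n<p$. If $q\in[0,2]$, then $$\inf_{A\in\mathbb{R}^{n\times p}}\ \inf_{\delta:\mathbb{R}^n\to\mathbb{R}}\ \sup_{x\in\mathbb{R}^p\setminus\{0\}}\Big|\frac{\delta(Ax)}{s_q(x)}-1\Big|\ge\frac1{2\pi e}\Big(1-\frac np\Big)^2-\frac1{2p}.$$ If $q\in(2,\infty]$, then $$\inf_{A\in\mathbb{R}^{n\times p}}\ \inf_{\delta:\mathbb{R}^n\to\mathbb{R}}\ \sup_{x\in\mathbb{R}^p\setminus\{0\}}\Big|\frac{\delta(Ax)}{s_q(x)}-1\Big|\ge\frac1{\sqrt{2\pi e}}\cdot\frac{1-(n/p)}{1+\sqrt{16\log(2p)}}-\frac1{2p}.$$
   Context: The infimum over $\delta$ is over all functions $\mathbb{R}^n\to\mathbb{R}$ (estimators using noiseless deterministic measurements $y=Ax$). For $x\in\mathbb{R}^p\setminus\{0\}$ let $\pi_j(x):=|x_j|/\|x\|_1$. For $q\notin\{0,1,\infty\}$, $s_q(x):=(\|x\|_q/\|x\|_1)^{q/(1-q)}=\exp\big(\frac1{1-q}\log\sum_j\pi_j(x)^q\big)$; $s_0(x):=\|x\|_0$ (number of nonzero entries), $s_1(x):=\exp\big(-\sum_j\pi_j(x)\log\pi_j(x)\big)$, $s_\infty(x):=\|x\|_1/\|x\|_\infty$ (these are the limits of $s_q$ as $q\to0,1,\infty$). *)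

(* Defs.v *)
From HB Require Import structures.
From mathcomp Require Import all_boot all_order all_algebra.
From mathcomp Require Import all_classical all_reals all_analysis.
Set Implicit Arguments. Unset Strict Implicit. Unset Printing Implicit Defensive.
Import Order.TTheory GRing.Theory Num.Theory.
Local Open Scope ring_scope.
Local Open Scope classical_set_scope.

Section Defs.
Variables (R : realType) (p : nat).
Implicit Types (x : 'cV[R]_p).

Definition l1norm x : R := \sum_(j < p) `|x j 0|.
Definition linfnorm x : R := \big[Num.max/0]_(j < p) `|x j 0|.
Definition lqnorm (q : R) x : R := (\sum_(j < p) `|x j 0| `^ q) `^ q^-1.
Definition pij x (j : 'I_p) : R := `|x j 0| / l1norm x.

Definition s_real (q : R) x : R :=
  if q == 0 then (#|[set j : 'I_p | x j 0 != 0]|)%:R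
  else if q == 1 then expR (- \sum_(j < p) pij x j * ln (pij x j))  (* entropy; 0 log 0 = 0 *)
  else (lqnorm q x / l1norm x) `^ (q / (1 - q)).

(* s_q for q in [0, +oo]; q = +oo gives ||x||_1/||x||_oo; -oo is never used *)
Definition s_q (q : \bar R) x : R :=
  match q with
  | r%:E => s_real r x
  | +oo%E => l1norm x / linfnorm x
  | -oo%E => 0
  end.
End Defs.

Definition worst_err (R : realType) (n p : nat) (q : \bar R)
  (A : 'M[R]_(n, p)) (delta : 'cV[R]_n -> R) : \bar R :=
  ereal_sup [set (`|delta (A *m x) / s_q q x - 1|)%:E | x in [set x : 'cV[R]_p | x != 0]].

Definition minimax_err (R : realType) (n p : nat) (q : \bar R) : \bar R :=
  ereal_inf [set ereal_inf [set worst_err q A delta | delta in [set: 'cV[R]_n -> R]]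
            | A in [set: 'M[R]_(n, p)]].

(* Main.v *)
Require Import Defs.
From HB Require Import structures.
From mathcomp Require Import all_boot all_order all_algebra.
From mathcomp Require Import all_classical all_reals all_analysis.
From mathcomp Require Import ring lra.
Import Order.TTheory GRing.Theory Num.Theory.
Local Open Scope ring_scope.
Set Implicit Arguments. Unset Strict Implicit.

Section Aux.
Variables (R : realType) (p : nat).
Implicit Types (v : 'cV[R]_p).

Lemma powE (a x : R) : 0 < a -> a `^ x = expR (x * ln a).
Proof. by move=> a0; rewrite /powR gt_eqF. Qed.

Lemma nz_entry v : v != 0 -> exists i, v i 0 != 0.
Proof.
move=> vn0; apply/not_existsP => H; move/eqP: vn0; apply; apply/matrixP => i j.
rewrite (ord1 j) mxE; apply/eqP; apply/negPn/negP => Hn; exact: (H i).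
Qed.

Lemma l1_gt0 v : v != 0 -> 0 < l1norm v.
Proof.
move=> /nz_entry [i Hi]; rewrite /l1norm (bigD1 i) //=.
apply: (@lt_le_trans _ _ `|v i 0|); first by rewrite normr_gt0.
by rewrite lerDl sumr_ge0.
Qed.

Lemma term_lt1 (a M r : R) : 0 < M -> 0 <= a -> a <= M -> 0 < r -> r < 1 ->
  a * expR ((r - 1) * ln M) <= a `^ r.
Proof.
move=> M0 a0 aM r0 r1; have [->|ap] := eqVneq a 0.
  by rewrite mul0r powR0 ?gt_eqF.
have apos : 0 < a by rewrite lt_neqAle eq_sym ap.
rewrite powE //.
have -> : r * ln a = ln a + (r - 1) * ln a by ring.
rewrite expRD lnK ?posrE //; apply: ler_wpM2l => //; rewrite ler_expR.
apply: ler_wnM2l; first by rewrite subr_le0 ltW.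
by rewrite ler_ln ?posrE // (lt_le_trans apos aM).
Qed.

Lemma term_gt1 (a M r : R) : 0 < M -> 0 <= a -> a <= M -> 1 < r ->
  a `^ r <= a * expR ((r - 1) * ln M).
Proof.
move=> M0 a0 aM r1; have [->|ap] := eqVneq a 0.
  by rewrite mul0r powR0 // gt_eqF // (lt_trans _ r1).
have apos : 0 < a by rewrite lt_neqAle eq_sym ap.
rewrite powE //.
have -> : r * ln a = ln a + (r - 1) * ln a by ring.
rewrite expRD lnK ?posrE //; apply: ler_wpM2l => //; rewrite ler_expR.
apply: ler_wpM2l; first by rewrite subr_ge0 ltW.
by rewrite ler_ln ?posrE // (lt_le_trans apos aM).
Qed.


Lemma linf_props v M : 0 < M -> (forall i, `|v i 0| <= M) -> v != 0 ->
  0 < linfnorm v /\ linfnorm v <= M.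
Proof.
move=> M0 vM vn0; split.
  have [i Hi] := nz_entry vn0.
  apply: (@lt_le_trans _ _ `|v i 0|); first by rewrite normr_gt0.
  exact: (le_bigmax _ (fun j => `|v j 0|) i).
by apply: bigmax_le => //; exact: ltW.
Qed.

Lemma s_lb (q : \bar R) v (M : R) : (0%:E <= q)%E -> 0 < M ->
  (forall i, `|v i 0| <= M) -> v != 0 -> l1norm v / M <= s_q q v.
Proof.
move=> q0 M0 vM vn0; have L0 := l1_gt0 vn0.
case: q q0 => [r| |] //= q0; last first.
  have [l0 lM] := linf_props M0 vM vn0.
  apply: ler_wpM2l; first exact: ltW.
  by rewrite lef_pV2 ?posrE.
rewrite lee_fin in q0; rewrite /s_real.
case: eqP => [_|/eqP r_n0].
  rewrite ler_pdivrMr //.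
  have -> : l1norm v = \sum_(i in [set i | v i 0 != 0]) `|v i 0|.
    rewrite /l1norm [RHS]big_mkcond /=; apply: eq_bigr => i _; rewrite inE.
    by case: (v i 0 =P 0) => [->|] /=; rewrite ?normr0.
  apply: le_trans (ler_sum _ (fun i _ => vM i)) _.
  rewrite sumr_const ?mulr1.
  have -> : #|[set j | v j 0 != 0]%classic| = #|[set j | v j 0 != 0]|.
    by apply: eq_card => i; rewrite !inE /in_mem /mem /= /in_set asboolb.
  by rewrite mulr_natl.
case: (r =P 1) => [_|/eqP r_n1].
  rewrite -[X in X <= _]lnK ?posrE ?divr_gt0 // ler_expR lerNr.
  apply: (@le_trans _ _ (\sum_(j < p) pij v j * ln (M / l1norm v))).
    apply: ler_sum => i _; rewrite /pij.
    have a0 : 0 <= `|v i 0| / l1norm v by rewrite divr_ge0 // ltW.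
    have [->|an0] := eqVneq (`|v i 0| / l1norm v) 0; first by rewrite !mul0r.
    apply: ler_wpM2l => //.
    have apos : 0 < `|v i 0| / l1norm v by rewrite lt_neqAle eq_sym an0.
    rewrite ler_ln ?posrE ?divr_gt0 //.
    rewrite ler_pM2r ?invr_gt0 //.
    by move: apos; rewrite pmulr_lgt0 // invr_gt0.
  rewrite -big_distrl /= /pij -big_distrl /= -/(l1norm v) mulfV ?gt_eqF // mul1r.
  by rewrite -invf_div lnV ?posrE ?divr_gt0.
have r0' : 0 < r by rewrite lt_neqAle eq_sym r_n0.
set L := l1norm v.
set S := \sum_(j < p) `|v j 0| `^ r.
have S0 : 0 < S.
  have [i Hi] := nz_entry vn0; rewrite /S (bigD1 i) //=.
  apply: (@lt_le_trans _ _ (`|v i 0| `^ r)); first by rewrite powR_gt0 // normr_gt0.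
  by rewrite lerDl sumr_ge0 // => j _; rewrite powR_ge0.
rewrite /lqnorm -/S.
rewrite powE ?divr_gt0 ?powR_gt0 //.
rewrite -[X in X <= _]lnK ?posrE ?divr_gt0 // ler_expR.
rewrite !lnM ?posrE ?invr_gt0 ?powR_gt0 // !lnV ?posrE // ln_powR.
set c := expR ((r - 1) * ln M).
have c0 : 0 < c by rewrite expR_gt0.
have lnLc : ln (L * c) = ln L + (r - 1) * ln M.
  by rewrite lnM ?posrE // expRK.
have Lsum : L * c = \sum_(j < p) `|v j 0| * c by rewrite /L /l1norm big_distrl.
have hr : r / (1 - r) * (r^-1 * ln S + - ln L) = (ln S - r * ln L) / (1 - r).
  by field; rewrite subr_eq0 eq_sym r_n1 r_n0.
rewrite hr.
have [r1|r1|r1] := ltgtP r 1; last by rewrite r1 eqxx in r_n1.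
  have key : L * c <= S.
    rewrite Lsum; apply: ler_sum => j _; apply: term_lt1 => //.
  have key2 : ln L + (r - 1) * ln M <= ln S.
    by rewrite -lnLc ler_ln ?posrE ?mulr_gt0.
  rewrite ler_pdivlMr ?subr_gt0 //; nra.
have key : S <= L * c.
  rewrite Lsum; apply: ler_sum => j _; apply: term_gt1 => //.
have key2 : ln S <= ln L + (r - 1) * ln M.
  by rewrite -lnLc ler_ln ?posrE ?mulr_gt0.
rewrite ler_ndivlMr ?subr_lt0 //; nra.
Qed.

Definition ej (j : 'I_p) : 'cV[R]_p := \col_(i < p) (i == j)%:R.

Lemma ejE j i : ej j i 0 = (i == j)%:R.
Proof. by rewrite mxE. Qed.

Lemma ej_neq0 j : ej j != 0.
Proof.
apply/negP => /eqP /matrixP /(_ j 0); rewrite ejE eqxx mxE => /eqP.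
by rewrite oner_eq0.
Qed.

Lemma l1_ej j : l1norm (ej j) = 1.
Proof.
rewrite /l1norm (bigD1 j) //= big1 ?ejE ?eqxx ?normr1 ?addr0 //.
by move=> i /negbTE; rewrite ejE => ->; rewrite normr0.
Qed.

Lemma s_ej (q : \bar R) j : (0%:E <= q)%E -> s_q q (ej j) = 1.
Proof.
case: q => [r| |] //= q0; last first.
  rewrite l1_ej; have -> : linfnorm (ej j) = 1; last by rewrite divr1.
  apply/eqP; rewrite eq_le; apply/andP; split.
    apply: bigmax_le => // i _; rewrite ejE; case: (i == j); by rewrite ?normr1 ?normr0.
  have := le_bigmax 0 (fun i => `|ej j i 0|) j; by rewrite /= ejE eqxx normr1.
rewrite /s_real; case: (r =P 0) => [_|/eqP r_n0].
  have -> : #|[set i | ej j i 0 != 0]%classic| = #|[set j]|.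
    apply: eq_card => i; rewrite !inE /in_mem /mem /= /in_set asboolb ejE.
    by case: (i == j); rewrite ?oner_eq0 ?eqxx.
  by rewrite cards1.
case: (r =P 1) => [_|/eqP r_n1].
  rewrite big1 ?oppr0 ?expR0 // => i _; rewrite /pij l1_ej divr1 ejE.
  by case: (i == j); rewrite ?normr1 ?ln1 ?mulr0 ?normr0 ?mul0r.
rewrite /lqnorm l1_ej divr1.
rewrite (bigD1 j) //= big1 ?ejE ?eqxx ?normr1 ?addr0 //.
  have h1 : forall x : R, 1 `^ x = 1 by move=> x; rewrite powR1.
  by rewrite !h1.
by move=> i /negbTE; rewrite ejE => ->; rewrite normr0 powR0.
Qed.

End Aux.

Arguments ej {R p}.
Section Main.
Variable R : realType.

Lemma ker_exists (n p : nat) (A : 'M[R]_(n, p)) : (n < p)%N ->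
  exists w : 'cV[R]_p, w != 0 /\ A *m w = 0.
Proof.
move=> np.
have nrf : ~~ row_free A^T.
  by rewrite /row_free mxrank_tr neq_ltn (leq_ltn_trans (rank_leq_row A) np).
have : ~ (forall v : 'rV[R]_p, v *m A^T = 0 -> v = 0).
  by move=> H; move: nrf; rewrite (inj_row_free H).
move=> /existsNP [v /not_implyP [vA vn0]].
exists v^T; split.
  by apply/eqP => h; apply: vn0; rewrite -(trmxK v) h trmx0.
by rewrite -[A]trmxK -trmx_mul vA trmx0.
Qed.

Lemma third (n p : nat) (A : 'M[R]_(n, p)) (dl : 'cV[R]_n -> R) (q : \bar R) :
  (n < p)%N -> (1 < p)%N -> (0%:E <= q)%E -> (((1/3 : R))%:E <= worst_err q A dl)%E.
Proof.
move=> np p1 q0.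
have [w [wn0 Aw]] := ker_exists A np.
have p0 : (0 < p)%N by exact: ltnW.
have [k _ kmax] := @eq_bigmax _ _ _ 0 (Ordinal p0) predT (fun i => `|w i 0|) isT
  (fun i _ => normr_ge0 _).
have wk : forall i, `|w i 0| <= `|w k 0|.
  by move=> i; rewrite -kmax; exact: (le_bigmax 0 (fun i => `|w i 0|) i).
have wk0 : w k 0 != 0.
  have [i Hi] := nz_entry wn0; rewrite -normr_gt0.
  by apply: lt_le_trans (wk i); rewrite normr_gt0.
have [j jk] : exists j : 'I_p, j != k.
  pose o0 : 'I_p := Ordinal p0; pose o1 : 'I_p := Ordinal p1.
  case: (eqVneq k o0) => [->|h]; [exists o1 | exists o0].
    by apply/eqP => /(congr1 val).
  by rewrite eq_sym.
set D := if w k 0 - w j 0 != 0 then w k 0 - w j 0 else - w k 0 - w j 0.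
have D0 : D != 0.
  rewrite /D; case: ifPn => // /negPn/eqP h; apply/eqP => h2.
  by move/eqP: wk0; apply; lra.
set t := D^-1.
set v := ej j + t *: w.
have vE : forall i, v i 0 = (i == j)%:R + t * w i 0 by move=> i; rewrite !mxE.
have vj : `|v j 0| = `|t * w k 0|.
  rewrite vE eqxx /t; move: D0; rewrite /D; case: ifPn => h D0.
    have -> : 1 + (w k 0 - w j 0)^-1 * w j 0 = (w k 0 - w j 0)^-1 * w k 0 by field.
    done.
  have -> : 1 + (- w k 0 - w j 0)^-1 * w j 0 = - ((- w k 0 - w j 0)^-1 * w k 0) by field.
  by rewrite normrN.
have vi : forall i, `|v i 0| <= `|t * w k 0|.
  move=> i; case: (eqVneq i j) => [->|ij]; first by rewrite vj.
  rewrite vE (negbTE ij) add0r !normrM; apply: ler_wpM2l => //.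
have M0 : 0 < `|t * w k 0| by rewrite normr_gt0 mulf_neq0 ?invr_eq0.
have vn0 : v != 0.
  by apply/eqP => h; move: M0; rewrite -vj h mxE normr0 ltxx.
have l1v : 2 * `|t * w k 0| <= l1norm v.
  rewrite /l1norm (bigD1 j) //= (bigD1 k) 1?eq_sym //= vj.
  have -> : `|v k 0| = `|t * w k 0| by rewrite vE eq_sym (negbTE jk) add0r.
  have : 0 <= \sum_(i < p | (i != j) && (i != k)) `|v i 0| by rewrite sumr_ge0.
  lra.
have sv : 2 <= s_q q v.
  apply: le_trans (s_lb q0 M0 vi vn0); by rewrite ler_pdivlMr.
have Av : A *m v = A *m ej j by rewrite mulmxDr -scalemxAr Aw scaler0 addr0.
rewrite /worst_err.
set d := dl (A *m ej j).
have [h|h] := lerP (1/3) `|d - 1|.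
  apply: le_ereal_sup_tmp; exists (`|d - 1|%:E); last by rewrite lee_fin.
  exists (ej j); first exact: ej_neq0.
  by rewrite s_ej // divr1.
apply: le_ereal_sup_tmp; exists (`|dl (A *m v) / s_q q v - 1|%:E).
  by exists v.
rewrite Av -/d lee_fin.
have s0 : 0 < s_q q v by apply: lt_le_trans sv.
have hd : d - 1 < 1/3 by apply: le_lt_trans h; exact: ler_norm.
have hds : d / s_q q v <= 2/3 by rewrite ler_pdivrMr //; lra.
apply: (@le_trans _ _ (1 - d / s_q q v)); first lra.
by rewrite distrC ler_norm.
Qed.
End Main.

Unset Implicit Arguments.
Theorem theorem4 (R : realType) (n p : nat) : (n < p)%N ->
  (forall q : \bar R, (0%:E <= q)%E -> (q <= 2%:E)%E ->
     ((1 / (2 * pi * expR 1) * (1 - n%:R / p%:R) ^+ 2 - 1 / (2 * p%:R))%:E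
        <= minimax_err n p q)%E) /\
  (forall q : \bar R, (2%:E < q)%E ->
     ((1 / Num.sqrt (2 * pi * expR 1)
         * ((1 - n%:R / p%:R) / (1 + Num.sqrt (16 * ln (2 * p%:R))))
         - 1 / (2 * p%:R))%:E
        <= minimax_err n p q)%E).
Proof.
move=> np.
have p0 : (0 < p)%N by exact: leq_ltn_trans (leq0n n) np.
have zero : forall q, (0%:E <= q)%E -> forall A dl, ((0:R)%:E <= @worst_err R n p q A dl)%E.
  move=> q q0 A dl; apply: le_ereal_sup_tmp.
  exists (`|dl (A *m ej (Ordinal p0)) / s_q q (ej (Ordinal p0)) - 1|%:E).
    by exists (ej (Ordinal p0)) => //; exact: ej_neq0.
  by rewrite lee_fin.
have lbm : forall q (c : R), (forall A dl, (c%:E <= @worst_err R n p q A dl)%E) ->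
    (c%:E <= minimax_err n p q)%E.
  move=> q c H; apply: le_ereal_inf_tmp => _ [A _ <-].
  by apply: le_ereal_inf_tmp => _ [dl _ <-]; exact: H.
have e94 : 9/4 <= expR (1:R).
  have h : 3/2 <= expR (1/2 : R) by apply: le_trans (expR_ge1Dx _); lra.
  have -> : expR (1:R) = expR (1/2) * expR (1/2) by rewrite -expRD; congr expR; lra.
  have h32 : (0:R) <= 3/2 by lra.
  have := ler_pM h32 h32 h h; lra.
have pi2 := @pi_ge2 R.
have c9 : 9 <= 2 * pi * expR (1:R).
  have h1 : (0:R) <= 2 * 2 by lra.
  have h2 : (2 * 2 : R) <= 2 * pi by lra.
  have h3 : (0:R) <= 9/4 by lra.
  have := ler_pM h1 h3 h2 e94; lra.
have X1 : n%:R / p%:R <= (1:R).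
  by rewrite ler_pdivrMr ?ltr0n // mul1r ler_nat ltnW.
have X0 : 0 <= n%:R / p%:R :> R by rewrite divr_ge0.
have pp : 0 < 2 * p%:R :> R by rewrite mulr_gt0 ?ltr0n.
have hp : 0 <= 1 / (2 * p%:R) :> R by rewrite divr_ge0 // ltW.
have hp1 : (p <= 1)%N -> 1 / (2 * p%:R) = 1/2 :> R.
  move=> h; have -> : p = 1%N by apply/eqP; rewrite eqn_leq h p0.
  by rewrite mulr1.
have y9 : 1 / (2 * pi * expR (1:R)) <= 1/9.
  rewrite ler_pdivrMr ?(lt_le_trans _ c9) //; lra.
have y0 : 0 <= 1 / (2 * pi * expR (1:R)) by rewrite divr_ge0 // (le_trans _ c9).
have sC : 3 <= Num.sqrt (2 * pi * expR (1:R)).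
  have h3 : Num.sqrt (3 ^+ 2) = 3 :> R by rewrite sqrtr_sqr ger0_norm.
  rewrite -[X in X <= _]h3 ler_sqrt; last by apply: le_trans c9; lra.
  by apply: le_trans c9; lra.
have u3 : 1 / Num.sqrt (2 * pi * expR (1:R)) <= 1/3.
  rewrite ler_pdivrMr ?(lt_le_trans _ sC) //; lra.
have u0 : 0 <= 1 / Num.sqrt (2 * pi * expR (1:R)) by rewrite divr_ge0 ?sqrtr_ge0.
set z := Num.sqrt (16 * ln (2 * p%:R : R)).
have z0 : 0 <= z by rewrite sqrtr_ge0.
have Y1 : (1 - n%:R / p%:R) / (1 + z) <= 1.
  by rewrite ler_pdivrMr ?ltr_wpDr //; lra.
have Y0 : 0 <= (1 - n%:R / p%:R) / (1 + z).
  by rewrite divr_ge0 //; lra.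
have X2 : (1 - n%:R / p%:R) ^+ 2 <= 1 :> R.
  have h1 : (0:R) <= 1 - n%:R / p%:R by lra.
  have h2 : (1 - n%:R / p%:R) <= 1 :> R by lra.
  by rewrite expr2; have := ler_pM h1 h1 h2 h2; rewrite mulr1.
have X3 : 0 <= (1 - n%:R / p%:R) ^+ 2 :> R by rewrite sqr_ge0.
split.
  move=> q q0 _; case: (boolP (1 < p)%N) => p1.
    apply: le_trans (lbm q (1/3) (fun A dl => third A dl np p1 q0)); rewrite lee_fin.
    have := ler_pM y0 X3 y9 X2; lra.
  apply: le_trans (lbm q 0 (zero q q0)); rewrite lee_fin.
  rewrite hp1; last by rewrite leqNgt.
  have := ler_pM y0 X3 y9 X2; lra.
move=> q q2; have q0 : (0%:E <= q)%E by apply: le_trans (ltW q2); rewrite lee_fin.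
case: (boolP (1 < p)%N) => p1.
  apply: le_trans (lbm q (1/3) (fun A dl => third A dl np p1 q0)); rewrite lee_fin.
  have := ler_pM u0 Y0 u3 Y1; lra.
apply: le_trans (lbm q 0 (zero q q0)); rewrite lee_fin.
rewrite hp1; last by rewrite leqNgt.
  have := ler_pM u0 Y0 u3 Y1; lra.
Qed.
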